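(* For every $A>0$ there is a constant $\kappa(A)>0$, depending only on $A$, such that for diffusive deposition, every $N$, every $\sigma\in\mathcal X_e(A)$ and every $i\in G_N$, $$P\big(\text{explorer attaches to pile } i\,\big|\,\sigma\big)\ge\kappa(A)\frac{\sigma_i^2}{N}.$$
   Context: Diffusive deposition: for $N\ge2$, $G_N=\{1,\dots,N\}$, a configuration $\sigma\in\mathbb N^N$ gives column (pile) heights. Given $\sigma$, an explorer is a walk $(X_n,Z_n)_{n\ge0}$ with $(X_n)$ i.i.d. uniform on $G_N$, $Z_0=\max_i\sigma_i+1$, and $(Z_{n+1}-Z_n)$ i.i.d. uniform on $\{-1,1\}$ independent of $(X_n)$. With $n^*=\inf\{n:Z_n\le\sigma_{X_n}\}$, the explorer attaches to pile $X_{n^*}$. The early regime is $\mathcal X_e(A)=\{\sigma\in\mathbb N^N:\ \sum_{i=1}^N\sigma_i^2\le AN,\ \sum_{i=1}^N\sigma_i<N/2\}$. *)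

(* Defs.v *)
From Stdlib Require Import Reals Lra Lia ZArith.
Open Scope R_scope.

(* Piles are indexed by G_N = {1,...,N}; a configuration is sigma : nat -> nat,
   of which only the values sigma 1, ..., sigma N matter. *)

Fixpoint sum1N (f : nat -> R) (N : nat) : R :=
  match N with
  | O => 0
  | S n => sum1N f n + f (S n)
  end.

Fixpoint maxh (sigma : nat -> nat) (N : nat) : nat :=
  match N with
  | O => 0%nat
  | S n => Nat.max (maxh sigma n) (sigma (S n))
  end.

(* #{ j in G_N : sigma_j < z } : number of piles above which height z is free *)
Fixpoint count_below (sigma : nat -> nat) (N : nat) (z : Z) : nat :=
  match N with
  | O => 0%nat
  | S n => (count_below sigma n z +
            (if Z_lt_dec (Z.of_nat (sigma (S n))) z then 1 else 0))%nat
  end.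

Definition early_regime (A : R) (N : nat) (sigma : nat -> nat) : Prop :=
  sum1N (fun j => INR (sigma j) ^ 2) N <= A * INR N /\
  sum1N (fun j => INR (sigma j)) N < INR N / 2.

(* attach_within N sigma i k z : probability that an explorer currently at
   height z (at some time n, with X_n, X_{n+1}, ... fresh i.i.d. uniform on G_N
   and fresh +-1 increments) stops at one of the times n, ..., n+k-1, and the
   pile it stops on is i.  Recursion: at the current time the explorer stops
   on pile i iff X_n = i and z <= sigma_i (prob 1/N * [z <= sigma_i]);
   it continues iff z > sigma_{X_n} (prob #{j : sigma_j < z}/N), and then
   moves to z+1 or z-1 with prob 1/2 each. *)
Fixpoint attach_within (N : nat) (sigma : nat -> nat) (i : nat) (k : nat) (z : Z)
  : R :=
  match k with
  | O => 0
  | S k' =>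
      (if Z_le_dec z (Z.of_nat (sigma i)) then / INR N else 0)
      + INR (count_below sigma N z) / INR N *
        ((attach_within N sigma i k' (z + 1)%Z + attach_within N sigma i k' (z - 1)%Z) / 2)
  end.

(* P(n* <= n-1 and X_{n*} = i | sigma), starting from Z_0 = max sigma + 1. *)
Definition attach_prob_upto (N : nat) (sigma : nat -> nat) (i : nat) (n : nat) : R :=
  attach_within N sigma i n (Z.of_nat (maxh sigma N) + 1)%Z.

(* P(explorer attaches to pile i | sigma) is the limit of attach_prob_upto as n -> oo
   (a nondecreasing bounded sequence). *)

(* Main.v *)
Require Import Defs.
From Stdlib Require Import Reals Lra Lia ZArith Psatz.
Open Scope R_scope.
Lemma sum1N_le (f g : nat -> R) (N : nat) :
  (forall j, (1 <= j <= N)%nat -> f j <= g j) -> sum1N f N <= sum1N g N.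
Proof.
  induction N as [|n IH]; intros H; simpl; [lra|].
  assert (sum1N f n <= sum1N g n) by (apply IH; intros; apply H; lia).
  assert (f (S n) <= g (S n)) by (apply H; lia). lra.
Qed.

Lemma sum1N_ext (f g : nat -> R) (N : nat) :
  (forall j, (1 <= j <= N)%nat -> f j = g j) -> sum1N f N = sum1N g N.
Proof.
  intros H; apply Rle_antisym; apply sum1N_le; intros j Hj; rewrite H; auto; lra.
Qed.

Lemma sum1N_plus (f g : nat -> R) (N : nat) :
  sum1N (fun j => f j + g j) N = sum1N f N + sum1N g N.
Proof. induction N; simpl; [lra|]. rewrite IHN; lra. Qed.

Lemma sum1N_scal (c : R) (f : nat -> R) (N : nat) :
  sum1N (fun j => c * f j) N = c * sum1N f N.
Proof. induction N; simpl; [lra|]. rewrite IHN; lra. Qed.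

Lemma sum1N_zero (N : nat) : sum1N (fun _ => 0) N = 0.
Proof. induction N as [|n IHn]; simpl; [reflexivity| rewrite IHn; ring]. Qed.

Lemma sum1N_nonneg (f : nat -> R) (N : nat) :
  (forall j, (1 <= j <= N)%nat -> 0 <= f j) -> 0 <= sum1N f N.
Proof.
  intros H. assert (sum1N (fun _ => 0) N <= sum1N f N) by (apply sum1N_le; auto).
  assert (sum1N (fun _ => 0) N = 0) by apply sum1N_zero.
  lra.
Qed.

Lemma sum1N_term (f : nat -> R) (N i : nat) :
  (forall j, (1 <= j <= N)%nat -> 0 <= f j) -> (1 <= i <= N)%nat -> f i <= sum1N f N.
Proof.
  induction N as [|n IH]; intros H Hi; [lia|]. simpl.
  destruct (Nat.eq_dec i (S n)) as [->|Hne].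
  - assert (0 <= sum1N f n) by (apply sum1N_nonneg; intros; apply H; lia). lra.
  - assert (f i <= sum1N f n) by (apply IH; [intros; apply H; lia| lia]).
    assert (0 <= f (S n)) by (apply H; lia). lra.
Qed.

Lemma maxh_ge (sigma : nat -> nat) (N j : nat) :
  (1 <= j <= N)%nat -> (sigma j <= maxh sigma N)%nat.
Proof.
  induction N as [|n IH]; intros Hj; [lia|]. simpl.
  destruct (Nat.eq_dec j (S n)) as [->|Hne]; [lia|].
  assert (sigma j <= maxh sigma n)%nat by (apply IH; lia). lia.
Qed.

Section Walk.
Variables (N : nat) (sigma : nat -> nat) (i : nat).
Hypothesis HN : (2 <= N)%nat.
Hypothesis Hi : (1 <= i <= N)%nat.

Definition Pc (z : Z) : R :=
  sum1N (fun j => if Z_le_dec z (Z.of_nat (sigma j)) then 1 else 0) N.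

Lemma count_Pc (z : Z) : INR (count_below sigma N z) = INR N - Pc z.
Proof.
  unfold Pc. clear HN Hi. induction N as [|n IH]; cbn [count_below sum1N]; [simpl; lra|].
  rewrite plus_INR, IH, S_INR.
  destruct (Z_lt_dec _ z); destruct (Z_le_dec z _); simpl; try lia; lra.
Qed.

Lemma Pc_nonneg z : 0 <= Pc z.
Proof. apply sum1N_nonneg; intros; destruct Z_le_dec; lra. Qed.

Lemma Pc_le_N z : Pc z <= INR N.
Proof.
  assert (0 <= INR (count_below sigma N z)) by apply pos_INR.
  rewrite count_Pc in H. lra.
Qed.

Lemma Pc_i z : (z <= Z.of_nat (sigma i))%Z -> 1 <= Pc z.
Proof.
  intros Hz. unfold Pc.
  assert (Ht := sum1N_term (fun j => if Z_le_dec z (Z.of_nat (sigma j)) then 1 else 0) N i).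
  simpl in Ht. destruct (Z_le_dec z _); [|lia]. apply Ht; auto.
  intros; destruct Z_le_dec; lra.
Qed.

Lemma INRN_pos : 0 < INR N.
Proof. apply lt_0_INR; lia. Qed.

Notation a := (attach_within N sigma i).

Lemma a_nonneg k z : 0 <= a k z.
Proof.
  revert z; induction k; intros z; simpl; [lra|].
  assert (HNp := INRN_pos).
  assert (0 <= INR (count_below sigma N z)) by apply pos_INR.
  assert (0 <= (if Z_le_dec z (Z.of_nat (sigma i)) then / INR N else 0))
    by (destruct Z_le_dec; [left; apply Rinv_0_lt_compat; lra| lra]).
  assert (0 <= INR (count_below sigma N z) / INR N) by (unfold Rdiv; apply Rmult_le_pos; [lra| left; apply Rinv_0_lt_compat; lra]).
  assert (0 <= a k (z-1)%Z) by apply IHk. specialize (IHk (z+1)%Z). apply Rplus_le_le_0_compat; [lra|]. apply Rmult_le_pos; lra.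
Qed.

Lemma q_eq z : INR (count_below sigma N z) / INR N = 1 - Pc z / INR N.
Proof. rewrite count_Pc. field. apply Rgt_not_eq, INRN_pos. Qed.

Lemma a_le1 k z : a k z <= 1.
Proof.
  revert z; induction k; intros z; simpl; [lra|].
  assert (HNp := INRN_pos).
  assert (Hq := q_eq z).
  assert (Hc0 : 0 <= INR (count_below sigma N z)) by apply pos_INR.
  assert (0 <= INR (count_below sigma N z) / INR N) by (unfold Rdiv; apply Rmult_le_pos; [lra| left; apply Rinv_0_lt_compat; lra]).
  assert (a k (z+1)%Z <= 1) by apply IHk. assert (a k (z-1)%Z <= 1) by apply IHk.
  assert (Havg : INR (count_below sigma N z) / INR N * ((a k (z + 1)%Z + a k (z - 1)%Z) / 2)
     <= INR (count_below sigma N z) / INR N) by (rewrite <- (Rmult_1_r (_ / INR N)) at 2; apply Rmult_le_compat_l; lra).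
  assert (HPN : Pc z / INR N = Pc z * / INR N) by reflexivity.
  assert (Hr : 0 < / INR N) by (apply Rinv_0_lt_compat; lra).
  assert (0 <= Pc z) by apply Pc_nonneg.
  destruct Z_le_dec as [Hz|Hz].
  - assert (1 <= Pc z) by (apply Pc_i; auto). rewrite Hq in Havg. nra.
  - rewrite Hq in Havg. nra.
Qed.

Lemma a_mono k z : a k z <= a (S k) z.
Proof.
  revert z; induction k; intros z.
  - apply a_nonneg.
  - change (a (S k) z) with ((if Z_le_dec z (Z.of_nat (sigma i)) then / INR N else 0)
      + INR (count_below sigma N z) / INR N * ((a k (z + 1)%Z + a k (z - 1)%Z) / 2)).
    change (a (S (S k)) z) with ((if Z_le_dec z (Z.of_nat (sigma i)) then / INR N else 0)
      + INR (count_below sigma N z) / INR N * ((a (S k) (z + 1)%Z + a (S k) (z - 1)%Z) / 2)).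
    assert (HNp := INRN_pos).
    assert (Hc0 : 0 <= INR (count_below sigma N z)) by apply pos_INR.
    assert (0 <= INR (count_below sigma N z) / INR N) by (unfold Rdiv; apply Rmult_le_pos; [lra| left; apply Rinv_0_lt_compat; lra]).
    assert (H1 := IHk (z+1)%Z). assert (H2 := IHk (z-1)%Z).
    apply Rplus_le_compat_l. apply Rmult_le_compat_l; lra.
Qed.

End Walk.

Section Construct.
Variables (N : nat) (sigma : nat -> nat) (i : nat) (A : R).
Hypothesis HN : (2 <= N)%nat.
Hypothesis Hi : (1 <= i <= N)%nat.
Hypothesis HA : 0 < A.
Hypothesis Hreg : early_regime A N sigma.

Definition pp (z : Z) : R := Pc N sigma z / INR N.

Lemma Pc_sq z : (0 <= z)%Z -> Pc N sigma z * IZR z ^ 2 <= sum1N (fun j => INR (sigma j) ^ 2) N.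
Proof.
  intros Hz. unfold Pc. rewrite Rmult_comm, <- sum1N_scal. apply sum1N_le.
  intros j Hj. rewrite INR_IZR_INZ. destruct Z_le_dec as [H|H].
  - apply IZR_le in H. apply IZR_le in Hz. simpl in *. nra.
  - simpl. nra.
Qed.

Lemma Pc_lin z : (0 <= z)%Z -> Pc N sigma z * IZR z <= sum1N (fun j => INR (sigma j)) N.
Proof.
  intros Hz. unfold Pc. rewrite Rmult_comm, <- sum1N_scal. apply sum1N_le.
  intros j Hj. rewrite INR_IZR_INZ. destruct Z_le_dec as [H|H].
  - apply IZR_le in H. apply IZR_le in Hz. simpl in *. nra.
  - assert (0 <= IZR (Z.of_nat (sigma j))) by (apply IZR_le; lia). nra.
Qed.

Lemma pp_sq z : (1 <= z)%Z -> pp z * IZR z ^ 2 <= A.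
Proof.
  intros Hz. destruct Hreg as [H2 _]. assert (HNp := INRN_pos N i HN Hi).
  assert (H := Pc_sq z ltac:(lia)). unfold pp.
  apply (Rmult_le_reg_r (INR N)); auto.
  replace (Pc N sigma z / INR N * IZR z ^ 2 * INR N) with (Pc N sigma z * IZR z ^ 2)
    by (field; lra). lra.
Qed.

Lemma pp_half z : (1 <= z)%Z -> pp z < 1/2.
Proof.
  intros Hz. destruct Hreg as [_ H1]. assert (HNp := INRN_pos N i HN Hi).
  assert (H := Pc_lin z ltac:(lia)). assert (Hz' : 1 <= IZR z) by (apply IZR_le; lia).
  assert (0 <= Pc N sigma z) by apply Pc_nonneg. unfold pp.
  apply (Rmult_lt_reg_r (INR N)); auto.
  replace (Pc N sigma z / INR N * INR N) with (Pc N sigma z) by (field; lra). nra.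
Qed.

Lemma pp_nonneg z : 0 <= pp z.
Proof.
  unfold pp. assert (HNp := INRN_pos N i HN Hi). assert (0 <= Pc N sigma z) by apply Pc_nonneg.
  unfold Rdiv. apply Rmult_le_pos; [lra| left; apply Rinv_0_lt_compat; lra].
Qed.

Definition Tf (n : Z) : R := if Z_le_dec n 0 then 0 else IZR n * (IZR n + 1) / 2.

Lemma Tf_lap n : Tf (n+1) + Tf (n-1) - 2 * Tf n = if Z_le_dec 0 n then 1 else 0.
Proof.
  unfold Tf. rewrite plus_IZR, minus_IZR.
  destruct (Z_le_dec (n+1) 0); destruct (Z_le_dec (n-1) 0); destruct (Z_le_dec n 0);
  destruct (Z_le_dec 0 n); try lia.
  all: try lra.
  all: try (assert (n = 0)%Z by lia; subst; simpl; lra).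
  all: try (assert (n = 1)%Z by lia; subst; simpl; lra).
  all: try field.
  all: idtac.
Qed.

Lemma Tf_mono n : Tf n <= Tf (n+1).
Proof.
  unfold Tf. rewrite plus_IZR.
  destruct (Z_le_dec (n+1) 0); destruct (Z_le_dec n 0); try lia; try lra.
  - assert (0 <= IZR n) by (apply IZR_le; lia). nra.
  - assert (1 <= IZR n) by (apply IZR_le; lia). nra.
Qed.

Lemma Tf_nonneg n : 0 <= Tf n.
Proof.
  unfold Tf. destruct Z_le_dec; [lra|]. assert (1 <= IZR n) by (apply IZR_le; lia). nra.
Qed.

Lemma Tf_bound s m : (0 <= m)%Z -> (0 <= s)%Z -> Tf (s - m) <= IZR s ^ 2.
Proof.
  intros Hm Hs. unfold Tf. destruct Z_le_dec. { assert (0 <= IZR s) by (apply IZR_le; lia). nra. }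
  rewrite minus_IZR. assert (0 <= IZR m) by (apply IZR_le; lia).
  assert (1 <= IZR s - IZR m) by (rewrite <- minus_IZR; apply IZR_le; lia). nra.
Qed.

Definition Phi (z : Z) : R := 4 / INR N * sum1N (fun j => Tf (Z.of_nat (sigma j) - z)) N.

Lemma Phi_lap z : Phi (z+1) + Phi (z-1) - 2 * Phi z = 4 * pp z.
Proof.
  unfold Phi, pp, Pc.
  assert (E : sum1N (fun j => Tf (Z.of_nat (sigma j) - (z + 1))) N
     + sum1N (fun j => Tf (Z.of_nat (sigma j) - (z - 1))) N
     - 2 * sum1N (fun j => Tf (Z.of_nat (sigma j) - z)) N
     = sum1N (fun j => if Z_le_dec z (Z.of_nat (sigma j)) then 1 else 0) N).
  { rewrite <- sum1N_plus. rewrite <- sum1N_scal.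
    assert (forall u v : R, u - v = u + (-1) * v) as Hm by (intros; ring).
    rewrite Hm, <- sum1N_scal, <- sum1N_plus. apply sum1N_ext. intros j _.
    set (n := (Z.of_nat (sigma j) - z)%Z).
    replace (Z.of_nat (sigma j) - (z + 1))%Z with (n - 1)%Z by (unfold n; ring).
    replace (Z.of_nat (sigma j) - (z - 1))%Z with (n + 1)%Z by (unfold n; ring).
    pose proof (Tf_lap n) as HL.
    destruct (Z_le_dec 0 n); destruct (Z_le_dec z (Z.of_nat (sigma j))); unfold n in *; try lia; lra. }
  assert (HNp := INRN_pos N i HN Hi). unfold Rdiv. rewrite <- E. field. lra.
Qed.

Lemma Phi_mono z : Phi (z+1) <= Phi z.
Proof.
  unfold Phi. assert (HNp := INRN_pos N i HN Hi).
  apply Rmult_le_compat_l. { unfold Rdiv. apply Rmult_le_pos; [lra| left; apply Rinv_0_lt_compat; lra]. }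
  apply sum1N_le. intros j _.
  replace (Z.of_nat (sigma j) - z)%Z with ((Z.of_nat (sigma j) - (z+1)) + 1)%Z by ring.
  apply Tf_mono.
Qed.

Lemma Phi_mono_n z n : Phi (z + Z.of_nat n) <= Phi z.
Proof.
  induction n. { simpl. rewrite Z.add_0_r. lra. }
  rewrite Nat2Z.inj_succ. replace (z + Z.succ (Z.of_nat n))%Z with ((z + Z.of_nat n) + 1)%Z by lia.
  pose proof (Phi_mono (z + Z.of_nat n)). lra.
Qed.

Lemma Phi_mono_le z y : (z <= y)%Z -> Phi y <= Phi z.
Proof.
  intros H. replace y with (z + Z.of_nat (Z.to_nat (y - z)))%Z by lia. apply Phi_mono_n.
Qed.

Lemma Phi_top : Phi (Z.of_nat (maxh sigma N) + 1) = 0.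
Proof.
  unfold Phi. rewrite (sum1N_ext _ (fun _ => 0)). { rewrite sum1N_zero. ring. }
  intros j Hj. pose proof (maxh_ge sigma N j Hj). unfold Tf. destruct Z_le_dec; [auto| lia].
Qed.

Lemma Phi_bound z : (0 <= z)%Z -> Phi z <= 4 * A.
Proof.
  intros Hz. destruct Hreg as [H2 _]. assert (HNp := INRN_pos N i HN Hi). unfold Phi.
  assert (sum1N (fun j => Tf (Z.of_nat (sigma j) - z)) N <= sum1N (fun j => INR (sigma j) ^ 2) N).
  { apply sum1N_le. intros j _. rewrite INR_IZR_INZ. apply Tf_bound; lia. }
  apply (Rmult_le_reg_r (INR N)); auto.
  replace (4 / INR N * sum1N (fun j => Tf (Z.of_nat (sigma j) - z)) N * INR N)
    with (4 * sum1N (fun j => Tf (Z.of_nat (sigma j) - z)) N) by (field; lra). lra.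
Qed.


Lemma exp_le x y : x <= y -> exp x <= exp y.
Proof. intros [H|H]; [left; apply exp_increasing; auto| subst; lra]. Qed.

Hypothesis Hh : (1 <= sigma i)%nat.

Definition hZ : Z := Z.of_nat (sigma i).
Definition dZ : Z := Z.of_nat ((sigma i + 3) / 4).
Definition aZ : Z := (hZ + 1 - 2 * dZ)%Z.
Definition bZ : Z := (hZ + 1)%Z.
Definition mZ : Z := (bZ - dZ)%Z.
Definition Mz : Z := Z.of_nat (maxh sigma N).
Definition HH : Z := (2 * Mz + 2)%Z.
Definition eps : R := / (2 * (A + 1)).
Definition V : R := eps * IZR dZ ^ 2.
Definition Fq (z : Z) : R := eps * (IZR z - IZR aZ) * (IZR bZ - IZR z).
Definition src (z : Z) : R := Rmax 0 (Fq z).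
Definition K : R := V / (exp (Phi mZ) * (IZR HH + 1 - IZR mZ)).
Definition desc (z : Z) : R :=
  if Z_le_dec mZ z then K * exp (Phi z) * (IZR HH + 1 - IZR z) else 0.
Definition phi (z : Z) : R := Rmax (src z) (desc z).
Definition ind1 (z : Z) : R := if Z_le_dec z hZ then 1 else 0.

Lemma d_facts : (4 * dZ <= hZ + 3 /\ hZ <= 4 * dZ /\ 1 <= hZ <= Mz)%Z.
Proof.
  unfold dZ, hZ, Mz. pose proof (Nat.div_mod (sigma i + 3) 4 ltac:(lia)).
  pose proof (Nat.mod_upper_bound (sigma i + 3) 4 ltac:(lia)).
  pose proof (maxh_ge sigma N i Hi). lia.
Qed.

Lemma eps_facts : 0 < eps /\ eps * A <= 1/2 /\ eps <= 1/2.
Proof.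
  unfold eps. assert (0 < 2 * (A + 1)) by lra.
  split; [apply Rinv_0_lt_compat; lra|].
  assert (E : / (2 * (A + 1)) * A = A / (2 * (A+1))) by (unfold Rdiv; ring).
  assert (A / (2 * (A+1)) <= 1/2) by (apply (Rmult_le_reg_r (2*(A+1))); [lra|]; unfold Rdiv; field_simplify; lra).
  split; [lra|].
  assert (/ (2 * (A + 1)) <= / 2) by (apply Rinv_le_contravar; lra). lra.
Qed.

Lemma Fq_le z : Fq z <= V.
Proof.
  unfold Fq, V. pose proof eps_facts as [He _].
  assert (IZR bZ - IZR aZ = 2 * IZR dZ) by (unfold aZ, bZ; rewrite ?minus_IZR, ?plus_IZR, ?mult_IZR; simpl; ring).
  pose proof (pow2_ge_0 (IZR z - IZR aZ - (IZR bZ - IZR z))).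
  assert ((IZR z - IZR aZ) * (IZR bZ - IZR z) <= IZR dZ ^ 2) by nra.
  replace (eps * (IZR z - IZR aZ) * (IZR bZ - IZR z)) with (eps * ((IZR z - IZR aZ) * (IZR bZ - IZR z))) by ring.
  apply Rmult_le_compat_l; lra.
Qed.

Lemma src_nonneg z : 0 <= src z.
Proof. apply Rmax_l. Qed.
Lemma phi_nonneg z : 0 <= phi z.
Proof. pose proof (src_nonneg z). pose proof (Rmax_l (src z) (desc z)). unfold phi. lra. Qed.
Lemma phi_ge_Fq z : Fq z <= phi z.
Proof. pose proof (Rmax_r 0 (Fq z)). pose proof (Rmax_l (src z) (desc z)). unfold phi, src in *. lra. Qed.
Lemma phi_ge_desc z : desc z <= phi z.
Proof. apply Rmax_r. Qed.

Lemma RHS_nonneg z : (1 <= z)%Z -> 0 <= ind1 z + (1 - pp z) * ((phi (z+1) + phi (z-1)) / 2).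
Proof.
  intros Hz. pose proof (pp_half z Hz). pose proof (phi_nonneg (z+1)). pose proof (phi_nonneg (z-1)).
  assert (0 <= ind1 z) by (unfold ind1; destruct Z_le_dec; lra).
  assert (0 <= (1 - pp z) * ((phi (z+1) + phi (z-1)) / 2)) by (apply Rmult_le_pos; lra). lra.
Qed.

Lemma src_check z : (1 <= z)%Z -> src z <= ind1 z + (1 - pp z) * ((phi (z+1) + phi (z-1)) / 2).
Proof.
  intros Hz. pose proof (RHS_nonneg z Hz).
  unfold src. apply Rmax_lub; [lra|].
  destruct (Rle_dec (Fq z) 0) as [Hf|Hf]; [lra|].
  apply Rnot_le_lt in Hf.
  pose proof d_facts as [Hd1 [Hd2 Hd3]]. pose proof eps_facts as [He1 [He2 He3]].
  assert (Hab : (aZ < z < bZ)%Z).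
  { unfold Fq in Hf. assert (Hb : IZR aZ < IZR bZ) by (apply IZR_lt; unfold aZ, bZ; lia).
    destruct (Z_le_dec z aZ) as [H1|H1].
    - apply IZR_le in H1.
      assert (0 <= eps * ((IZR aZ - IZR z) * (IZR bZ - IZR z))) by (apply Rmult_le_pos; [lra| apply Rmult_le_pos; lra]).
      assert (eps * (IZR z - IZR aZ) * (IZR bZ - IZR z) = - (eps * ((IZR aZ - IZR z) * (IZR bZ - IZR z)))) by ring.
      lra.
    - destruct (Z_le_dec bZ z) as [H2|H2]; [apply IZR_le in H2| lia].
      assert (0 <= eps * ((IZR z - IZR aZ) * (IZR z - IZR bZ))) by (apply Rmult_le_pos; [lra| apply Rmult_le_pos; lra]).
      assert (eps * (IZR z - IZR aZ) * (IZR bZ - IZR z) = - (eps * ((IZR z - IZR aZ) * (IZR z - IZR bZ)))) by ring.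
      lra. }
  assert (Hind : ind1 z = 1) by (unfold ind1; destruct Z_le_dec; unfold bZ in Hab; [auto| lia]).
  assert (Hdz : (dZ <= z)%Z) by (unfold aZ in Hab; lia).
  assert (Hd0 : (0 <= dZ)%Z) by lia.
  apply IZR_le in Hdz. apply IZR_le in Hd0.
  pose proof (pp_sq z Hz) as Hsq. pose proof (pp_half z Hz). pose proof (pp_nonneg z).
  assert (Hpd : pp z * IZR dZ ^ 2 <= A).
  { assert (IZR dZ ^ 2 <= IZR z ^ 2) by nra. nra. }
  assert (HpF : pp z * Fq z <= 1/2).
  { pose proof (Fq_le z). unfold V in *. assert (pp z * Fq z <= pp z * (eps * IZR dZ ^ 2)) by (apply Rmult_le_compat_l; lra).
    assert (pp z * (eps * IZR dZ ^ 2) = eps * (pp z * IZR dZ ^ 2)) by ring.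
    assert (eps * (pp z * IZR dZ ^ 2) <= eps * A) by (apply Rmult_le_compat_l; lra). lra. }
  assert (Havg : Fq z - eps <= (phi (z+1) + phi (z-1)) / 2).
  { pose proof (phi_ge_Fq (z+1)). pose proof (phi_ge_Fq (z-1)).
    assert (Fq (z+1) + Fq (z-1) = 2 * Fq z - 2 * eps) by (unfold Fq; rewrite plus_IZR, minus_IZR; simpl; ring). lra. }
  assert ((1 - pp z) * (Fq z - eps) <= (1 - pp z) * ((phi (z+1) + phi (z-1)) / 2)) by (apply Rmult_le_compat_l; lra).
  rewrite Hind. nra.
Qed.


Lemma mZ_facts : (1 <= mZ <= hZ /\ hZ <= Mz /\ 0 <= aZ /\ aZ < mZ < bZ /\ mZ - aZ = dZ /\ bZ - mZ = dZ /\ 1 <= dZ)%Z.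
Proof. pose proof d_facts. unfold mZ, aZ, bZ. lia. Qed.

Lemma denom_pos : 0 < IZR HH + 1 - IZR mZ.
Proof.
  pose proof mZ_facts. assert (mZ < HH + 1)%Z by (unfold HH; lia).
  apply IZR_lt in H0. rewrite plus_IZR in H0. simpl in H0. lra.
Qed.

Lemma V_pos : 0 < V.
Proof.
  unfold V. pose proof eps_facts. pose proof mZ_facts. assert (1 <= IZR dZ) by (apply IZR_le; lia).
  apply Rmult_lt_0_compat; [lra| nra].
Qed.

Lemma K_pos : 0 < K.
Proof.
  unfold K. pose proof V_pos. pose proof denom_pos. pose proof (exp_pos (Phi mZ)).
  unfold Rdiv. apply Rmult_lt_0_compat; auto. apply Rinv_0_lt_compat. apply Rmult_lt_0_compat; auto.
Qed.

Lemma desc_m : desc mZ = V.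
Proof.
  unfold desc. destruct Z_le_dec; [|lia]. unfold K. pose proof denom_pos. pose proof (exp_pos (Phi mZ)).
  field. split; lra.
Qed.

Lemma src_m : src mZ = V.
Proof.
  unfold src, Fq, V. pose proof mZ_facts as [_ [_ [_ [_ [E1 [E2 _]]]]]].
  rewrite <- !minus_IZR, E1, E2. rewrite Rmax_right. { ring. } pose proof V_pos. unfold V in H. nra.
Qed.

Lemma desc_check z : (1 <= z <= HH)%Z -> desc z <= ind1 z + (1 - pp z) * ((phi (z+1) + phi (z-1)) / 2).
Proof.
  intros Hz. pose proof (RHS_nonneg z ltac:(lia)) as Hnn.
  destruct (Z_lt_le_dec z mZ) as [Hlt|Hge].
  { unfold desc. destruct Z_le_dec; [lia| lra]. }
  destruct (Z.eq_dec z mZ) as [->|Hne].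
  { rewrite desc_m, <- src_m. apply src_check. pose proof mZ_facts; lia. }
  assert (Hz1 : (mZ <= z - 1)%Z) by lia.
  assert (Ed : desc z = K * exp (Phi z) * (IZR HH + 1 - IZR z)) by (unfold desc; destruct Z_le_dec; [auto| lia]).
  assert (Ep : desc (z+1) = K * exp (Phi (z+1)) * (IZR HH + 1 - IZR z - 1))
    by (unfold desc; destruct Z_le_dec; [rewrite plus_IZR; simpl; ring| lia]).
  assert (Em : desc (z-1) = K * exp (Phi (z-1)) * (IZR HH + 1 - IZR z + 1))
    by (unfold desc; destruct Z_le_dec; [rewrite minus_IZR; simpl; ring| lia]).
  rewrite Ed.
  set (l := IZR HH + 1 - IZR z).
  assert (Hl : 1 <= l) by (unfold l; assert (z <= HH)%Z by lia; apply IZR_le in H; lra).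
  set (e0 := exp (Phi z)). set (ep := exp (Phi (z+1))). set (em := exp (Phi (z-1))).
  set (dp := Phi (z+1) - Phi z). set (dm := Phi (z-1) - Phi z).
  assert (Hdp : dp <= 0) by (unfold dp; pose proof (Phi_mono z); lra).
  assert (Hdm : 0 <= dm) by (unfold dm; pose proof (Phi_mono (z-1)); replace (z - 1 + 1)%Z with z in H by ring; lra).
  assert (Hsum : dp + dm = 4 * pp z) by (unfold dp, dm; pose proof (Phi_lap z); lra).
  assert (He0 : 0 < e0) by apply exp_pos.
  assert (Hep : e0 * (1 + dp) <= ep).
  { unfold ep, e0. replace (Phi (z+1)) with (Phi z + dp) by (unfold dp; ring). rewrite exp_plus.
    apply Rmult_le_compat_l; [left; apply exp_pos| apply exp_ineq1_le]. }
  assert (Hem : e0 * (1 + dm) <= em).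
  { unfold em, e0. replace (Phi (z-1)) with (Phi z + dm) by (unfold dm; ring). rewrite exp_plus.
    apply Rmult_le_compat_l; [left; apply exp_pos| apply exp_ineq1_le]. }
  assert (H1 : e0 * (1 + dp) * (l - 1) <= ep * (l - 1)) by (apply Rmult_le_compat_r; lra).
  assert (H2 : e0 * (1 + dm) * (l + 1) <= em * (l + 1)) by (apply Rmult_le_compat_r; lra).
  assert (H3 : e0 * l * (2 + 4 * pp z) <= ep * (l - 1) + em * (l + 1)).
  { assert (e0 * (1 + dp) * (l - 1) + e0 * (1 + dm) * (l + 1) = e0 * l * (2 + 4 * pp z) + e0 * (dm - dp))
      by (rewrite <- Hsum; ring).
    assert (0 <= e0 * (dm - dp)) by (apply Rmult_le_pos; lra). lra. }
  pose proof (pp_half z ltac:(lia)). pose proof (pp_nonneg z). pose proof K_pos.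
  assert (Ep' : desc (z+1) = K * ep * (l - 1)) by (rewrite Ep; unfold ep, l; ring).
  assert (Em' : desc (z-1) = K * em * (l + 1)) by (rewrite Em; unfold em, l; ring).
  clearbody l e0 ep em dp dm.
  assert (HH4 : (1 - pp z) * ((desc (z+1) + desc (z-1)) / 2) >= K * e0 * l).
  { rewrite Ep', Em'.
    assert ((1 - pp z) * ((K * ep * (l - 1) + K * em * (l + 1)) / 2)
       = K * ((1 - pp z) * (ep * (l - 1) + em * (l + 1))) / 2) by (unfold Rdiv; ring).
    assert ((1 - pp z) * (e0 * l * (2 + 4 * pp z)) <= (1 - pp z) * (ep * (l - 1) + em * (l + 1)))
      by (apply Rmult_le_compat_l; lra).
    assert (e0 * l * 2 <= (1 - pp z) * (e0 * l * (2 + 4 * pp z))).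
    { assert (0 <= e0 * l) by (apply Rmult_le_pos; lra).
      assert ((1 - pp z) * (e0 * l * (2 + 4 * pp z)) - e0 * l * 2 = (e0 * l) * (2 * pp z * (1 - 2 * pp z))) by ring.
      assert (0 <= 2 * pp z * (1 - 2 * pp z)) by (apply Rmult_le_pos; lra).
      assert (0 <= (e0 * l) * (2 * pp z * (1 - 2 * pp z))) by (apply Rmult_le_pos; lra). lra. }
    assert (K * (e0 * l * 2) <= K * ((1 - pp z) * (ep * (l - 1) + em * (l + 1)))) by (apply Rmult_le_compat_l; lra).
    lra. }
  assert (HH5 : (1 - pp z) * ((desc (z+1) + desc (z-1)) / 2) <= (1 - pp z) * ((phi (z+1) + phi (z-1)) / 2)).
  { apply Rmult_le_compat_l; [lra|]. pose proof (phi_ge_desc (z+1)). pose proof (phi_ge_desc (z-1)). lra. }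
  assert (0 <= ind1 z) by (unfold ind1; destruct Z_le_dec; lra).
  lra.
Qed.

Lemma phi_check z : (1 <= z <= HH)%Z -> phi z <= ind1 z + (1 - pp z) * ((phi (z+1) + phi (z-1)) / 2).
Proof. intros Hz. apply Rmax_lub; [apply src_check; lia| apply desc_check; auto]. Qed.


Definition g (z : Z) : R := phi z / INR N.

Lemma g_sub z : (1 <= z <= HH)%Z ->
  g z <= (if Z_le_dec z (Z.of_nat (sigma i)) then / INR N else 0)
         + INR (count_below sigma N z) / INR N * ((g (z+1) + g (z-1)) / 2).
Proof.
  intros Hz. rewrite (q_eq N sigma i HN Hi z). fold (pp z).
  pose proof (phi_check z Hz) as Hc. assert (HNp := INRN_pos N i HN Hi).
  assert (E : (if Z_le_dec z (Z.of_nat (sigma i)) then / INR N else 0)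
         + (1 - pp z) * ((g (z+1) + g (z-1)) / 2)
         = (ind1 z + (1 - pp z) * ((phi (z+1) + phi (z-1)) / 2)) / INR N).
  { unfold ind1, g, hZ. destruct Z_le_dec; field; lra. }
  rewrite E. unfold g. unfold Rdiv. apply Rmult_le_compat_r; [left; apply Rinv_0_lt_compat; lra| auto].
Qed.

Lemma phi_le_V z : phi z <= V.
Proof.
  unfold phi. apply Rmax_lub.
  - unfold src. apply Rmax_lub; [left; apply V_pos| apply Fq_le].
  - unfold desc. destruct Z_le_dec as [Hm|Hm]; [| left; apply V_pos].
    rewrite <- desc_m. unfold desc. destruct (Z_le_dec mZ mZ); [|lia].
    pose proof K_pos. pose proof denom_pos.
    assert (exp (Phi z) <= exp (Phi mZ)) by (apply exp_le, Phi_mono_le; auto).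
    pose proof (exp_pos (Phi z)).
    assert (IZR mZ <= IZR z) by (apply IZR_le; auto).
    assert (0 <= K * exp (Phi z)) by (apply Rmult_le_pos; lra).
    assert (K * exp (Phi z) <= K * exp (Phi mZ)) by (apply Rmult_le_compat_l; lra).
    destruct (Rle_dec (IZR HH + 1 - IZR z) 0).
    + assert (0 <= K * exp (Phi mZ) * (IZR HH + 1 - IZR mZ)) by (apply Rmult_le_pos; [apply Rmult_le_pos|]; lra).
      assert (K * exp (Phi z) * (IZR HH + 1 - IZR z) <= 0).
      { assert (0 <= K * exp (Phi z) * (-(IZR HH + 1 - IZR z))) by (apply Rmult_le_pos; lra). lra. }
      lra.
    + apply Rmult_le_compat; lra.
Qed.

Lemma phi_bdry y : (y = 0 \/ y = HH + 1)%Z -> phi y = 0.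
Proof.
  intros Hy. pose proof mZ_facts as [Hm [Hh' [Ha [Ham [E1 [E2 Hd]]]]]].
  assert (Hs : src y = 0).
  { unfold src. apply Rmax_left. unfold Fq. pose proof eps_facts as [He _].
    assert (IZR aZ <= IZR bZ) by (apply IZR_le; lia).
    destruct Hy as [Ey|Ey]; rewrite Ey.
    - assert (0 <= IZR aZ) by (apply IZR_le; lia). simpl.
      assert (0 <= eps * (IZR aZ * IZR bZ)) by (apply Rmult_le_pos; [lra| apply Rmult_le_pos; lra]).
      assert (eps * (0 - IZR aZ) * (IZR bZ - 0) = - (eps * (IZR aZ * IZR bZ))) by ring. lra.
    - assert (IZR bZ <= IZR (HH+1)) by (apply IZR_le; unfold HH, bZ; lia).
      assert (0 <= eps * ((IZR (HH+1) - IZR aZ) * (IZR (HH+1) - IZR bZ))) by (apply Rmult_le_pos; [lra| apply Rmult_le_pos; lra]).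
      assert (eps * (IZR (HH+1) - IZR aZ) * (IZR bZ - IZR (HH+1)) = - (eps * ((IZR (HH+1) - IZR aZ) * (IZR (HH+1) - IZR bZ)))) by ring. lra. }
  assert (Hd0 : desc y = 0).
  { unfold desc. destruct Z_le_dec; [|auto]. destruct Hy as [Ey|Ey]; rewrite Ey; [lia|]. rewrite plus_IZR. simpl. ring. }
  unfold phi. rewrite Hs, Hd0. apply Rmax_left. lra.
Qed.

Definition w (z : Z) : R := IZR z * (IZR HH + 1 - IZR z) + 1.
Definition Cw : R := (IZR HH + 1) ^ 2 + 1.
Definition th : R := 1 - / Cw.

Lemma HH_pos : 0 <= IZR HH.
Proof. apply IZR_le. unfold HH, Mz. lia. Qed.

Lemma th_facts : 0 <= th < 1.
Proof.
  unfold th, Cw. pose proof HH_pos. assert (1 <= (IZR HH + 1) ^ 2 + 1) by nra.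
  assert (0 < / ((IZR HH + 1) ^ 2 + 1)) by (apply Rinv_0_lt_compat; lra).
  assert (/ ((IZR HH + 1) ^ 2 + 1) <= / 1) by (apply Rinv_le_contravar; lra). rewrite Rinv_1 in H2. lra.
Qed.

Lemma w_facts z : (0 <= z <= HH + 1)%Z -> 1 <= w z <= Cw.
Proof.
  intros Hz. unfold w, Cw. assert (0 <= IZR z) by (apply IZR_le; lia).
  assert (IZR z <= IZR HH + 1) by (rewrite <- (plus_IZR HH 1); apply IZR_le; lia).
  pose proof HH_pos. split; nra.
Qed.

Lemma w_avg z : (w (z+1) + w (z-1)) / 2 = w z - 1.
Proof. unfold w. rewrite plus_IZR, minus_IZR. simpl. field. Qed.

Lemma w_check z q : (1 <= z <= HH)%Z -> 0 <= q <= 1 -> q * ((w (z+1) + w (z-1)) / 2) <= th * w z.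
Proof.
  intros Hz Hq. rewrite w_avg. pose proof (w_facts z ltac:(lia)) as [W1 W2].
  unfold th. assert (0 < Cw) by lra.
  assert (w z / Cw <= 1) by (apply (Rmult_le_reg_r Cw); [lra|]; unfold Rdiv; rewrite Rmult_assoc, Rinv_l; lra).
  assert (q * (w z - 1) <= w z - 1) by nra.
  assert ((1 - / Cw) * w z = w z - w z / Cw) by (unfold Rdiv; ring). lra.
Qed.

Definition Bc : R := V / INR N.

Definition L (k : nat) (z : Z) : R :=
  if Z_le_dec 1 z then if Z_le_dec z HH then g z - Bc * th ^ k * w z else 0 else 0.

Lemma Bc_pos : 0 < Bc.
Proof. unfold Bc. pose proof V_pos. pose proof (INRN_pos N i HN Hi). unfold Rdiv. apply Rmult_lt_0_compat; auto. apply Rinv_0_lt_compat; auto. Qed.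

Lemma L_ge y k : (0 <= y <= HH + 1)%Z -> g y - Bc * th ^ k * w y <= L k y.
Proof.
  intros Hy. unfold L. pose proof Bc_pos. pose proof th_facts. pose proof (w_facts y Hy).
  assert (0 <= th ^ k) by (apply pow_le; lra).
  assert (0 <= Bc * th ^ k * w y) by (apply Rmult_le_pos; [apply Rmult_le_pos|]; lra).
  destruct (Z_le_dec 1 y); [destruct (Z_le_dec y HH)|]; try lra.
  - assert (g y = 0) by (unfold g; rewrite phi_bdry; [unfold Rdiv; ring| lia]). lra.
  - assert (g y = 0) by (unfold g; rewrite phi_bdry; [unfold Rdiv; ring| lia]). lra.
Qed.

Lemma main_ind k z : L k z <= attach_within N sigma i k z.
Proof.
  revert z; induction k; intros z.
  - unfold L. simpl. destruct Z_le_dec; [destruct Z_le_dec|]; try lra.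
    unfold g. pose proof (phi_le_V z). pose proof (INRN_pos N i HN Hi). pose proof (w_facts z ltac:(lia)).
    pose proof Bc_pos. unfold Bc.
    assert (phi z / INR N <= V / INR N) by (unfold Rdiv; apply Rmult_le_compat_r; [left; apply Rinv_0_lt_compat; lra| auto]).
    assert (V / INR N <= V / INR N * 1 * w z) by (rewrite Rmult_1_r; unfold Bc in H2; nra). lra.
  - unfold L at 1. destruct (Z_le_dec 1 z) as [Hz1|Hz1]; [destruct (Z_le_dec z HH) as [Hz2|Hz2]|];
      try apply a_nonneg; try lia.
    change (attach_within N sigma i (S k) z) with ((if Z_le_dec z (Z.of_nat (sigma i)) then / INR N else 0)
      + INR (count_below sigma N z) / INR N * ((attach_within N sigma i k (z + 1)%Z + attach_within N sigma i k (z - 1)%Z) / 2)).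
    set (q := INR (count_below sigma N z) / INR N).
    assert (Hq : 0 <= q <= 1).
    { unfold q. rewrite (q_eq N sigma i HN Hi z). fold (pp z). pose proof (pp_half z Hz1). pose proof (pp_nonneg z). lra. }
    pose proof (g_sub z ltac:(lia)) as Hg. fold q in Hg.
    pose proof (L_ge (z+1) k ltac:(lia)). pose proof (L_ge (z-1) k ltac:(lia)).
    pose proof (IHk (z+1)%Z). pose proof (IHk (z-1)%Z).
    pose proof (w_check z q ltac:(lia) Hq) as Hw.
    pose proof Bc_pos. pose proof th_facts. assert (0 <= th ^ k) by (apply pow_le; lra).
    assert (Hav : (g (z+1) + g (z-1)) / 2 - Bc * th ^ k * ((w (z+1) + w (z-1)) / 2)
       <= (attach_within N sigma i k (z + 1)%Z + attach_within N sigma i k (z - 1)%Z) / 2) by lra.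
    assert (Hm : q * ((g (z+1) + g (z-1)) / 2 - Bc * th ^ k * ((w (z+1) + w (z-1)) / 2))
       <= q * ((attach_within N sigma i k (z + 1)%Z + attach_within N sigma i k (z - 1)%Z) / 2))
       by (apply Rmult_le_compat_l; lra).
    assert (Hw' : Bc * th ^ k * (q * ((w (z+1) + w (z-1)) / 2)) <= Bc * th ^ k * (th * w z))
      by (apply Rmult_le_compat_l; [apply Rmult_le_pos|]; lra).
    simpl pow.
    assert (E1 : q * ((g (z+1) + g (z-1)) / 2 - Bc * th ^ k * ((w (z+1) + w (z-1)) / 2))
      = q * ((g (z+1) + g (z-1)) / 2) - Bc * th ^ k * (q * ((w (z+1) + w (z-1)) / 2))) by ring.
    assert (E2 : Bc * (th * th ^ k) * w z = Bc * th ^ k * (th * w z)) by ring.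
    lra.
Qed.


Lemma z0_facts : (1 <= Mz + 1 <= HH)%Z.
Proof. unfold HH, Mz. lia. Qed.

Lemma lower p : Un_cv (attach_prob_upto N sigma i) p -> g (Mz + 1) <= p.
Proof.
  intros Hcv.
  assert (Hg : Un_growing (attach_prob_upto N sigma i)) by (intros n; apply a_mono; auto).
  assert (Hk : forall k, g (Mz+1) - Bc * th ^ k * w (Mz+1) <= p).
  { intros k. pose proof (growing_ineq _ _ Hg Hcv k) as Hle. unfold attach_prob_upto in Hle.
    pose proof (main_ind k (Mz+1)%Z) as Hm. unfold L in Hm. pose proof z0_facts.
    destruct Z_le_dec; [destruct Z_le_dec|]; try lia. unfold Mz in *. lra. }
  destruct (Rle_dec (g (Mz+1)) p) as [Hok|Hno]; auto. exfalso. apply Rnot_le_lt in Hno.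
  pose proof Bc_pos. pose proof (w_facts (Mz+1) ltac:(pose proof z0_facts; lia)). pose proof th_facts.
  set (W := Bc * w (Mz+1)).
  assert (0 < W) by (unfold W; apply Rmult_lt_0_compat; lra).
  assert (Hy : 0 < (g (Mz+1) - p) / W) by (unfold Rdiv; apply Rmult_lt_0_compat; [lra| apply Rinv_0_lt_compat; lra]).
  assert (Hth : Rabs th < 1) by (rewrite Rabs_right; lra).
  destruct (pow_lt_1_zero th Hth _ Hy) as [k0 Hk0]. specialize (Hk0 k0 (le_n _)).
  rewrite Rabs_right in Hk0 by (apply Rle_ge, pow_le; lra).
  specialize (Hk k0).
  assert (th ^ k0 * W < g (Mz+1) - p).
  { apply (Rmult_lt_compat_r W) in Hk0; auto. unfold Rdiv in Hk0. rewrite Rmult_assoc, Rinv_l in Hk0; lra. }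
  assert (Bc * th ^ k0 * w (Mz+1) = th ^ k0 * W) by (unfold W; ring). lra.
Qed.

Lemma g_z0 : eps * exp (- (4 * A)) / 32 * INR (sigma i) ^ 2 / INR N <= g (Mz + 1).
Proof.
  pose proof (INRN_pos N i HN Hi) as HNp.
  assert (Hdesc : desc (Mz+1) <= phi (Mz+1)) by apply phi_ge_desc.
  assert (Ed : desc (Mz+1) = K * (IZR Mz + 2)).
  { unfold desc. destruct Z_le_dec. 2:{ pose proof mZ_facts. lia. }
    unfold Mz. rewrite Phi_top, exp_0. unfold HH. rewrite !plus_IZR, mult_IZR. fold Mz. simpl. ring. }
  pose proof mZ_facts as [Hm [Hh' [Ha [Ham [E1 [E2 Hd]]]]]].
  assert (HM0 : 0 <= IZR Mz) by (apply IZR_le; unfold Mz; lia).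
  assert (Hm1 : 1 <= IZR mZ) by (apply IZR_le; lia).
  assert (HPm : exp (Phi mZ) <= exp (4 * A)) by (apply exp_le, Phi_bound; lia).
  pose proof (exp_pos (Phi mZ)). pose proof denom_pos. pose proof V_pos.
  assert (HKd : V / (2 * exp (4 * A)) <= K * (IZR Mz + 2)).
  { unfold K. unfold HH in *. rewrite plus_IZR, mult_IZR in *. simpl in *.
    apply (Rmult_le_reg_r (exp (Phi mZ) * (2 * IZR Mz + 2 + 1 - IZR mZ))). { apply Rmult_lt_0_compat; lra. }
    replace (V / (exp (Phi mZ) * (2 * IZR Mz + 2 + 1 - IZR mZ)) * (IZR Mz + 2) *
      (exp (Phi mZ) * (2 * IZR Mz + 2 + 1 - IZR mZ))) with (V * (IZR Mz + 2)) by (field; lra).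
    pose proof (exp_pos (4 * A)).
    replace (V / (2 * exp (4 * A)) * (exp (Phi mZ) * (2 * IZR Mz + 2 + 1 - IZR mZ)))
      with (V * ((exp (Phi mZ) / exp (4 * A)) * ((2 * IZR Mz + 2 + 1 - IZR mZ) / 2))) by (field; lra).
    apply Rmult_le_compat_l; [lra|].
    assert (exp (Phi mZ) / exp (4 * A) <= 1) by (apply (Rmult_le_reg_r (exp (4*A))); [lra|]; unfold Rdiv; rewrite Rmult_assoc, Rinv_l; lra).
    assert (0 <= exp (Phi mZ) / exp (4 * A)) by (unfold Rdiv; apply Rmult_le_pos; [lra| left; apply Rinv_0_lt_compat; lra]).
    assert (0 <= (2 * IZR Mz + 2 + 1 - IZR mZ) / 2) by lra.
    assert ((2 * IZR Mz + 2 + 1 - IZR mZ) / 2 <= IZR Mz + 2) by lra.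
    nra. }
  assert (HV : eps * IZR hZ ^ 2 / 16 <= V).
  { unfold V. pose proof d_facts as [_ [Hhd _]]. pose proof eps_facts as [He _].
    apply IZR_le in Hhd. rewrite mult_IZR in Hhd. simpl in Hhd.
    assert (0 <= IZR hZ) by (apply IZR_le; unfold hZ; lia).
    assert (IZR hZ ^ 2 <= 16 * IZR dZ ^ 2) by nra.
    assert (eps * IZR hZ ^ 2 <= eps * (16 * IZR dZ ^ 2)) by (apply Rmult_le_compat_l; lra). lra. }
  unfold g. rewrite INR_IZR_INZ. fold hZ.
  rewrite exp_Ropp. pose proof (exp_pos (4 * A)).
  assert (Ek : eps * / exp (4 * A) / 32 * IZR hZ ^ 2 = (eps * IZR hZ ^ 2 / 16) / (2 * exp (4 * A))) by (field; lra).
  rewrite Ek.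
  assert ((eps * IZR hZ ^ 2 / 16) / (2 * exp (4 * A)) <= V / (2 * exp (4 * A))) by (unfold Rdiv; apply Rmult_le_compat_r; [left; apply Rinv_0_lt_compat; lra| lra]).
  unfold Rdiv at 1. unfold Rdiv at 3. apply Rmult_le_compat_r; [left; apply Rinv_0_lt_compat; lra|]. lra.
Qed.

End Construct.
Theorem corollary4p1 :
  forall A : R, 0 < A ->
  exists kappa : R, 0 < kappa /\
    forall (N : nat) (sigma : nat -> nat) (i : nat),
      (2 <= N)%nat ->
      early_regime A N sigma ->
      (1 <= i <= N)%nat ->
      exists p : R,
        Un_cv (attach_prob_upto N sigma i) p /\
        p >= kappa * (INR (sigma i) ^ 2) / INR N.
Proof.
  intros A HA. exists (eps A * exp (- (4 * A)) / 32). split.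
  { unfold eps. pose proof (exp_pos (- (4 * A))).
    assert (0 < / (2 * (A + 1))) by (apply Rinv_0_lt_compat; lra).
    unfold Rdiv. apply Rmult_lt_0_compat; [apply Rmult_lt_0_compat; auto| lra]. }
  intros N sigma i HN Hreg Hi.
  assert (Hg : Un_growing (attach_prob_upto N sigma i)) by (intros n; apply a_mono; auto).
  assert (Hb : has_ub (attach_prob_upto N sigma i)).
  { exists 1. intros x [n ->]. apply a_le1; auto. }
  destruct (growing_cv _ Hg Hb) as [p Hp]. exists p. split; auto.
  pose proof (growing_ineq _ _ Hg Hp 0%nat) as H0. unfold attach_prob_upto in H0. simpl in H0.
  destruct (sigma i) eqn:Es.
  - simpl. unfold Rdiv. lra.
  - rewrite <- Es. apply Rle_ge.
    pose proof (g_z0 N sigma i A HN Hi HA Hreg ltac:(lia)) as G1.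
    pose proof (lower N sigma i A HN Hi HA Hreg ltac:(lia) p Hp) as G2. lra.
Qed.
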